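(* For all $k,j,n,m\in\mathbb{N}_0$ and $x,y\in[0,1]$, $$B_{k,j;n,m}(x,y;q)=[x]_q^k[y]_q^j\sum_{l=0}^{n}\sum_{r=0}^{m}\binom{n}{l}\binom{m}{r}B_l^{(k)}\bigl([1-x]_q\bigr)\,B_r^{(j)}\bigl([1-y]_q\bigr)\,S(n-l,k)\,S(m-r,j).$$
   Context: Fix $q\in(0,1)$. For real $x$ put $[x]_q=\frac{1-q^x}{1-q}$. For $k,j,n,m\in\mathbb{Z}$ and $x,y\in[0,1]$, the modified $q$-Bernstein polynomial of two variables is $B_{k,j;n,m}(x,y;q)=\binom{n}{k}\binom{m}{j}[x]_q^k[y]_q^j[1-x]_q^{n-k}[1-y]_q^{m-j}$ if $0\le k\le n$ and $0\le j\le m$, and $B_{k,j;n,m}(x,y;q)=0$ otherwise. For $k\in\mathbb{N}_0$ the generalized Bernoulli polynomials $B_n^{(k)}(z)$ of order $k$ are defined by $\left(\frac{t}{e^t-1}\right)^k e^{zt}=\sum_{n=0}^\infty B_n^{(k)}(z)\frac{t^n}{n!}$. The Stirling numbers of the second kind $S(n,k)$ are defined by $\frac{(e^t-1)^k}{k!}=\sum_{n=0}^\infty S(n,k)\frac{t^n}{n!}$. *)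

(* Defs.v *)
From Stdlib Require Import Reals List Arith Factorial.
Import ListNotations.
Open Scope R_scope.

(* q-number [x]_q = (1 - q^x)/(1 - q), real exponent via Rpower (q > 0). *)
Definition qnum (q x : R) : R := (1 - Rpower q x) / (1 - q).

(* Modified q-Bernstein polynomial of two variables (k,j,n,m : nat, so the
   conditions 0 <= k, 0 <= j are automatic). *)
Definition qBern2 (q : R) (k j n m : nat) (x y : R) : R :=
  if (Nat.leb k n && Nat.leb j m)%bool then
    C n k * C m j * qnum q x ^ k * qnum q y ^ j
      * qnum q (1 - x) ^ (n - k) * qnum q (1 - y) ^ (m - j)
  else 0.

(* Formal power series over R: coefficient sequences. *)
Definition ps := nat -> R.
Definition ps_one : ps := fun n => if Nat.eqb n 0 then 1 else 0.
Definition ps_mul (f g : ps) : ps :=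
  fun n => sum_f_R0 (fun i => f i * g (n - i)%nat) n.
Fixpoint ps_pow (f : ps) (k : nat) : ps :=
  match k with O => ps_one | S k' => ps_mul f (ps_pow f k') end.
(* Multiplicative inverse of a series f with f 0 <> 0:
   g 0 = 1/f 0, g n = -(1/f 0) * sum_{i=1}^n f i * g (n-i). *)
Fixpoint ps_inv_list (f : ps) (n : nat) : list R :=
  match n with
  | O => [/ f O]
  | S n' => let l := ps_inv_list f n' in
            l ++ [ - / f O * sum_f_R0 (fun i => f (S i) * nth (n' - i)%nat l 0) n' ]
  end.
Definition ps_inv (f : ps) : ps := fun n => nth n (ps_inv_list f n) 0.

(* Series of e^{zt}, of e^t - 1, and of (e^t - 1)/t. *)
Definition ps_exp (z : R) : ps := fun n => z ^ n / INR (fact n).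
Definition ps_expm1 : ps := fun n => if Nat.eqb n 0 then 0 else / INR (fact n).
Definition ps_expm1_div_t : ps := fun n => / INR (fact (S n)).

(* Generalized Bernoulli polynomials:
   (t/(e^t-1))^k e^{zt} = sum_n B_n^{(k)}(z) t^n/n!  (as formal series). *)
Definition genBernoulli (k n : nat) (z : R) : R :=
  INR (fact n) * ps_mul (ps_pow (ps_inv ps_expm1_div_t) k) (ps_exp z) n.

(* Stirling numbers of the second kind: (e^t-1)^k/k! = sum_n S(n,k) t^n/n!. *)
Definition stirling2 (n k : nat) : R :=
  INR (fact n) * (ps_pow ps_expm1 k n / INR (fact k)).

(* Main.v *)
Require Import Defs.
From Stdlib Require Import Reals List Arith Lia Lra.
Import ListNotations.
Open Scope R_scope.

Lemma inv_list_len f n : length (ps_inv_list f n) = S n.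
Proof. induction n; simpl; auto. rewrite length_app, IHn; simpl; lia. Qed.

Lemma inv_list_nth f n i : (i <= n)%nat -> nth i (ps_inv_list f n) 0 = ps_inv f i.
Proof.
  induction n; intros Hi.
  - assert (i = 0%nat) by lia; subst; reflexivity.
  - destruct (Nat.eq_dec i (S n)) as [->|Hne]; [reflexivity|].
    simpl. rewrite app_nth1 by (rewrite inv_list_len; lia). apply IHn; lia.
Qed.

Lemma ps_inv_S f n : ps_inv f (S n) =
  - / f O * sum_f_R0 (fun i => f (S i) * ps_inv f (n - i)%nat) n.
Proof.
  unfold ps_inv at 1. simpl. rewrite app_nth2 by (rewrite inv_list_len; lia).
  rewrite inv_list_len, Nat.sub_diag. simpl. f_equal.
  apply sum_eq. intros i Hi. rewrite inv_list_nth by lia. reflexivity.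
Qed.

Lemma ps_inv_spec f n : f O <> 0 -> ps_mul f (ps_inv f) n = ps_one n.
Proof.
  intros H. destruct n.
  - unfold ps_mul, ps_one; simpl. unfold ps_inv; simpl. field; auto.
  - unfold ps_mul, ps_one. rewrite decomp_sum by lia. simpl.
    rewrite ps_inv_S. field; auto.
Qed.
From mathcomp Require Import all_boot all_algebra.
From mathcomp Require Import Rstruct.
From mathcomp Require Import ring zify.
Import GRing.Theory.
Local Open Scope ring_scope.

Definition Tr (N : nat) (f : ps) : {poly R} := \poly_(i < N) f i.
Definition agree N (f : ps) (p : {poly R}) := forall i, (i < N)%N -> f i = p`_i.
Definition eqN N (p q : {poly R}) := forall i, (i < N)%N -> p`_i = q`_i.

Lemma ps_mulE f g n : ps_mul f g n = \sum_(i < n.+1) f i * g (n - i)%N.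
Proof. by rewrite /ps_mul sum_f_R0E big_mkord. Qed.

Lemma agree_Tr N f : agree N f (Tr N f).
Proof. by move=> i Hi; rewrite coef_poly Hi. Qed.

Lemma agree_mul N f g p q : agree N f p -> agree N g q -> agree N (ps_mul f g) (p * q).
Proof.
move=> Hf Hg i Hi; rewrite ps_mulE coefM; apply: eq_bigr => j _.
have := ltn_ord j => Hj.
rewrite Hf ?Hg //; lia.
Qed.

Lemma agree_one N : agree N ps_one 1.
Proof. by move=> [|i] _; rewrite coef1. Qed.

Lemma agree_pow N f p k : agree N f p -> agree N (ps_pow f k) (p ^+ k).
Proof.
move=> H; elim: k => [|k IH] /=; first exact: agree_one.
by rewrite exprS; apply: agree_mul.
Qed.

Lemma agree_eqN N f p q : agree N f p -> eqN N p q -> agree N f q.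
Proof. by move=> H1 H2 i Hi; rewrite H1 // H2. Qed.

Lemma eqN_mull N r p q : eqN N p q -> eqN N (r * p) (r * q).
Proof.
move=> H i Hi; rewrite !coefM; apply: eq_bigr => j _; rewrite H //; lia.
Qed.

Lemma eqN_pow N p k : eqN N p 1 -> eqN N (p ^+ k) 1.
Proof.
move=> H; elim: k => [|k IH]; first by move=> i _; rewrite expr0.
move=> i Hi; rewrite exprS.
have := @eqN_mull N p _ _ IH i Hi => ->.
by rewrite mulr1 H.
Qed.

Lemma factnz n : INR (fact n) != 0.
Proof. by apply/eqP; apply: INR_fact_neq_0. Qed.

Lemma key (k n : nat) (z : R) :
  \sum_(l < n.+1) (C n l * genBernoulli k l z * stirling2 (n - l) k)
  = if (k <= n)%N then C n k * z ^+ (n - k) else 0.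
Proof.
set D := ps_expm1_div_t; set N := n.+1.
set I := Tr N (ps_inv D); set Dp := Tr N D; set E := Tr N (ps_exp z).
set A := I ^+ k * E.
have hA : agree N (ps_mul (ps_pow (ps_inv D) k) (ps_exp z)) A.
  by apply: agree_mul; [apply: agree_pow|]; apply: agree_Tr.
have hX : agree N ps_expm1 ('X * Dp).
  move=> [|i] Hi; rewrite coefXM //= /Dp coef_poly.
  by rewrite (ltn_trans (ltnSn i) Hi).
set B := ('X * Dp) ^+ k.
have hB : agree N (ps_pow ps_expm1 k) B by apply: agree_pow.
have hID : eqN N (I * Dp) 1.
  have h := agree_mul N _ _ _ _ (agree_Tr N D) (agree_Tr N (ps_inv D)).
  move=> i Hi; rewrite mulrC -(h i Hi) -(agree_one N i Hi) ps_inv_spec //.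
  rewrite /D /ps_expm1_div_t /=. rewrite RinvE. apply/eqP. rewrite invr_eq0. exact: (factnz 1).
have -> : \sum_(l < n.+1) (C n l * genBernoulli k l z * stirling2 (n - l) k)
   = INR (fact n) / INR (fact k) * (A * B)`_n.
  rewrite coefM mulr_sumr; apply: eq_bigr => l _.
  have Hl := ltn_ord l.
  rewrite /genBernoulli /stirling2 hA // hB; last by rewrite /N; lia.
  rewrite /C.
  have := factnz n; have := factnz k; have := factnz l; have := factnz (n - l).
  move=> h1 h2 h3 h4. rewrite ?RmultE ?RdivE ?RinvE. idtac.
  field. by rewrite h3 h2 andbT; exact: h1.
have -> : (A * B)`_n = ('X^k * (E * (I * Dp) ^+ k))`_n.
  have eAB : A * B = 'X^k * (E * (I * Dp) ^+ k) :> {poly R} by rewrite /A /B !exprMn; ring.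
  by rewrite eAB.
rewrite coefXnM ltnNge.
case: (leqP k n) => Hkn /=; last by rewrite mulr0.
rewrite (@eqN_mull N E _ _ (@eqN_pow N _ k hID)); last by rewrite /N; lia.
rewrite mulr1 /E coef_poly.
have -> : (n - k < N)%N by rewrite /N; lia.
rewrite /ps_exp /C RpowE.
have := factnz n; have := factnz k; have := factnz (n - k).
move=> h1 h2 h3. rewrite !RdivE !RmultE. field. by rewrite h1 h2.
Qed.

Lemma key2 (k n : nat) (z : R) :
  sum_f_R0 (fun l => C n l * genBernoulli k l z * stirling2 (n - l) k) n
  = if (k <= n)%N then C n k * z ^+ (n - k) else 0.
Proof. by rewrite sum_f_R0E big_mkord key. Qed.

Local Close Scope ring_scope.
Open Scope R_scope.

Theorem theorem10 (q : R) (hq0 : 0 < q) (hq1 : q < 1)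
  (k j n m : nat) (x y : R)
  (hx0 : 0 <= x) (hx1 : x <= 1) (hy0 : 0 <= y) (hy1 : y <= 1) :
  qBern2 q k j n m x y =
  qnum q x ^ k * qnum q y ^ j *
  sum_f_R0 (fun l =>
    sum_f_R0 (fun r =>
      C n l * C m r
      * genBernoulli k l (qnum q (1 - x))
      * genBernoulli j r (qnum q (1 - y))
      * stirling2 (n - l) k * stirling2 (m - r) j) m) n.
Proof.
Local Open Scope ring_scope.
set a := qnum q x; set b := qnum q y; set u := qnum q (1 - x); set v := qnum q (1 - y).
have -> : sum_f_R0 (fun l =>
    sum_f_R0 (fun r =>
      C n l * C m r * genBernoulli k l u * genBernoulli j r v
      * stirling2 (n - l) k * stirling2 (m - r) j) m) n
  = (sum_f_R0 (fun l => C n l * genBernoulli k l u * stirling2 (n - l) k) n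
     * sum_f_R0 (fun r => C m r * genBernoulli j r v * stirling2 (m - r) j) m).
  rewrite !sum_f_R0E big_distrl /=; apply: eq_bigr => l _.
  rewrite sum_f_R0E big_distrr /=; apply: eq_bigr => r _.
  ring.
rewrite !key2 /qBern2 -/a -/b -/u -/v.
have Ek : Nat.leb k n = (k <= n)%N.
  by case: (leqP k n) => h; [apply/Nat.leb_le | apply/Nat.leb_gt]; lia.
have Ej : Nat.leb j m = (j <= m)%N.
  by case: (leqP j m) => h; [apply/Nat.leb_le | apply/Nat.leb_gt]; lia.
rewrite Ek Ej.
case: (k <= n)%N; case: (j <= m)%N => /=; rewrite ?RmultE ?RpowE ?mulr0 ?mul0r //.
- by rewrite !minusE; ring.
- by rewrite mulr0.
Qed.
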